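(* Let $g:\mathbb{R}^d\to\mathbb{R}$ be convex and let $\mathcal{X}=\{x:g(x)\le0\}$. Assume there is $R>0$ with $\mathcal{X}\subseteq R\mathbb{B}$. Suppose Slater's condition holds: there exist $\xi>0$ and $y\in\mathbb{R}^d$ with $g(y)\le-\xi$. Then for every $c\in(0,1)$, with $\epsilon=c\xi$ and $\sigma=(1-c)\frac{\xi}{2R}$: - the set $\{x\in\mathbb{R}^d:g(x)=-\epsilon\}$ is nonempty, and - $\|s\|\ge\sigma$ for every $x$ with $g(x)=-\epsilon$ and every $s\in\partial g(x)$.
   Context: $\|\cdot\|$ is the Euclidean norm, $\mathbb{B}=\{x\in\mathbb{R}^d:\|x\|\le1\}$, and $\partial g(x)$ is the subdifferential of $g$ at $x$. *)

(* Defs.v *)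
From HB Require Import structures.
From mathcomp Require Import all_boot all_order all_algebra.
From mathcomp Require Import reals.
Set Implicit Arguments. Unset Strict Implicit. Unset Printing Implicit Defensive.
Import Order.TTheory GRing.Theory Num.Theory.
Local Open Scope ring_scope.

Definition dotv (R : realType) (d : nat) (u v : 'rV[R]_d) : R :=
  \sum_(i < d) u ord0 i * v ord0 i.
Definition enorm (R : realType) (d : nat) (u : 'rV[R]_d) : R :=
  Num.sqrt (dotv u u).

Definition convex_fun (R : realType) (d : nat) (g : 'rV[R]_d -> R) : Prop :=
  forall (x y : 'rV[R]_d) (t : R), 0 <= t -> t <= 1 ->
    g (t *: x + (1 - t) *: y) <= t * g x + (1 - t) * g y.

Definition subdiff (R : realType) (d : nat) (g : 'rV[R]_d -> R) (x : 'rV[R]_d)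
  : 'rV[R]_d -> Prop :=
  fun s => forall z : 'rV[R]_d, g x + dotv s (z - x) <= g z.

(* Main.v *)
Require Import Defs.
From HB Require Import structures.
From mathcomp Require Import all_boot all_order all_algebra.
From mathcomp Require Import classical_sets reals.
From mathcomp Require Import ring lra.
Import Order.TTheory GRing.Theory Num.Theory.
Local Open Scope ring_scope.

Section Aux.
Variable R : realType.

Definition cvx1 (phi : R -> R) := forall a b s : R, 0 <= s -> s <= 1 ->
  phi (s * a + (1 - s) * b) <= s * phi a + (1 - s) * phi b.

Lemma three_pt (phi : R -> R) : cvx1 phi -> forall a b c : R, a < b -> b < c ->
  (c - a) * phi b <= (c - b) * phi a + (b - a) * phi c.
Proof.
move=> hc a b c hab hbc.
have hca : 0 < c - a by lra.
set s := (c - b) / (c - a).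
have hs0 : 0 <= s by rewrite /s divr_ge0 //; lra.
have hs1 : s <= 1 by rewrite /s ler_pdivrMr //; lra.
have hb : b = s * a + (1 - s) * c.
  rewrite /s; field; lra.
have := hc a c s hs0 hs1; rewrite -hb => H.
have e1 : (c - a) * s = c - b by rewrite /s; field; lra.
have e2 : (c - a) * (1 - s) = b - a by rewrite /s; field; lra.
clearbody s.
have := ler_wpM2l (ltW hca) H.
by rewrite mulrDr !mulrA e1 e2.
Qed.

Lemma ivt_cvx (phi : R -> R) v : cvx1 phi -> phi 0 < v -> v < phi 1 ->
  exists t, phi t = v.
Proof.
move=> hc h0 h1.
pose E : R -> Prop := fun t => 0 <= t <= 1 /\ phi t <= v.
have E0 : E 0 by rewrite /E /=; split; [rewrite lexx ler01|lra].
have hs : has_sup E.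
  split; first by exists 0.
  by exists 1 => t [/andP[_ ->]].
set T := sup E.
have Tub : forall t, E t -> t <= T := sup_upper_bound hs.
have T0 : 0 <= T := Tub _ E0.
have T1 : T <= 1.
  by apply: ge_sup; [exists 0|move=> t [/andP[_ ->]]].
exists T.
have hA : phi T <= v.
  rewrite leNgt; apply/negP => hT.
  set dl := phi T - v.
  set M := `|phi 2 - v| + 1.
  have hM : 0 < M by rewrite /M ltr_pwDr // normr_ge0.
  have hdl : 0 < dl by rewrite /dl; lra.
  have [t [/andP [t0 t1] ht] htT] := sup_adherent (divr_gt0 hdl hM) hs.
  have tT := Tub t (conj (introT andP (conj t0 t1)) ht).
  have [eq|lt] := eqVneq t T.
    by move: ht; rewrite eq; lra.
  have ltT : t < T by rewrite lt_neqAle lt tT.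
  have H2 : T < 2 by lra.
  have H := three_pt phi hc _ _ _ ltT H2.
  have hphi2 : phi 2 - v <= M by rewrite /M; have := ler_norm (phi 2 - v); lra.
  have hTt : (T - t) * M < dl.
    have : T - t < dl / M by move: htT; rewrite -/T; lra.
    by rewrite ltr_pdivlMr.
  have : (2 - t) * (phi T - v) <= (T - t) * (phi 2 - v).
    have : (2 - T) * phi t <= (2 - T) * v by rewrite ler_pM2l //; lra.
    lra.
  have : (T - t) * (phi 2 - v) <= (T - t) * M by rewrite ler_pM2l //; lra.
  have : dl <= (2 - t) * dl by rewrite ler_pMl //; lra.
  move: hTt; rewrite /dl; nra.
have hB : v <= phi T.
  rewrite leNgt; apply/negP => hT.
  have T1' : T < 1.
    rewrite lt_neqAle T1 andbT; apply/eqP => e; move: hT; rewrite e; lra.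
  set dl := v - phi T.
  set K := phi 1 - phi T.
  have hdl : 0 < dl by rewrite /dl; lra.
  have hK : 0 < K by rewrite /K; lra.
  set q := dl / (dl + K).
  have q0 : 0 < q by rewrite /q divr_gt0 //; lra.
  have q1 : q < 1 by rewrite /q ltr_pdivrMr; lra.
  have qK : q * K <= dl by rewrite /q mulrAC ler_pdivrMr; nra.
  set b := T + (1 - T) * q.
  have hb1 : T < b by rewrite /b; nra.
  have hb2 : b < 1 by rewrite /b; nra.
  have H := three_pt phi hc _ _ _ hb1 hb2.
  have : E b.
    split; first by apply/andP; split; lra.
    have e1 : 1 - b = (1 - T) * (1 - q) by rewrite /b; ring.
    have e2 : b - T = (1 - T) * q by rewrite /b; ring.
    rewrite e1 e2 in H.
    have hTp : 0 < 1 - T by lra.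
    suff : (1 - T) * phi b <= (1 - T) * v by rewrite ler_pM2l.
    have : (1 - T) * (q * K) <= (1 - T) * dl by rewrite ler_pM2l.
    move: H; rewrite /K /dl; nra.
  move/Tub; lra.
by apply/le_anti; rewrite hA hB.
Qed.

Variable d : nat.

Lemma dotvB (u v w : 'rV[R]_d) : dotv u (v - w) = dotv u v - dotv u w.
Proof.
rewrite /dotv -sumrB; apply: eq_bigr => i _; rewrite !mxE; ring.
Qed.

Lemma dotvN (u v : 'rV[R]_d) : dotv u (- v) = - dotv u v.
Proof.
rewrite /dotv -sumrN; apply: eq_bigr => i _; rewrite !mxE; ring.
Qed.

Lemma enormN (u : 'rV[R]_d) : enorm (- u) = enorm u.
Proof.
rewrite /enorm /dotv; congr Num.sqrt; apply: eq_bigr => i _; rewrite !mxE; ring.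
Qed.

Lemma dotv_ge0 (u : 'rV[R]_d) : 0 <= dotv u u.
Proof. by apply: sumr_ge0 => i _; rewrite -expr2 sqr_ge0. Qed.

Lemma cs2 (u v : 'rV[R]_d) : dotv u v ^+ 2 <= dotv u u * dotv v v.
Proof.
set P := \sum_(i < d) \sum_(j < d) (u ord0 i ^+ 2 * v ord0 j ^+ 2).
set Q := \sum_(i < d) \sum_(j < d) (u ord0 j ^+ 2 * v ord0 i ^+ 2).
set D := \sum_(i < d) \sum_(j < d) (u ord0 i * v ord0 i * (u ord0 j * v ord0 j)).
have eP : dotv u u * dotv v v = P.
  rewrite /dotv mulr_suml; apply: eq_bigr => i _; rewrite mulr_sumr.
  by apply: eq_bigr => j _; ring.
have eD : dotv u v ^+ 2 = D.
  rewrite /dotv expr2 mulr_suml; apply: eq_bigr => i _; rewrite mulr_sumr.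
  by apply: eq_bigr => j _; ring.
have eQ : Q = P by rewrite /Q exchange_big.
have eF : \sum_(i < d) \sum_(j < d) (u ord0 i * v ord0 j - u ord0 j * v ord0 i) ^+ 2
   = P + Q - 2 * D.
  rewrite /P /Q /D -big_split mulr_sumr -sumrB; apply: eq_bigr => i _.
  rewrite -big_split mulr_sumr -sumrB; apply: eq_bigr => j _ /=; ring.
have : 0 <= P + Q - 2 * D.
  rewrite -eF; apply: sumr_ge0 => i _; apply: sumr_ge0 => j _; exact: sqr_ge0.
rewrite eP eD eQ; lra.
Qed.

Lemma cs (u v : 'rV[R]_d) : dotv u v <= enorm u * enorm v.
Proof.
rewrite /enorm -sqrtrM ?dotv_ge0 //.
apply: (le_trans (ler_norm _)).
rewrite -sqrtr_sqr ler_sqrt ?cs2 //.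
by rewrite mulr_ge0 ?dotv_ge0.
Qed.

End Aux.

Theorem proposition1 (R : realType) (d : nat) (g : 'rV[R]_d -> R)
  (hd : (0 < d)%N)
  (hconv : convex_fun g)
  (Rad : R) (hRad : 0 < Rad)
  (hbdd : forall x : 'rV[R]_d, g x <= 0 -> enorm x <= Rad)
  (xi : R) (y : 'rV[R]_d) (hxi : 0 < xi) (hslater : g y <= - xi) :
  forall c : R, 0 < c -> c < 1 ->
    let eps := c * xi in
    let sigma := (1 - c) * (xi / (2 * Rad)) in
    (exists x : 'rV[R]_d, g x = - eps) /\
    (forall (x s : 'rV[R]_d), g x = - eps -> subdiff g x s -> sigma <= enorm s).
Proof.
move=> c c0 c1 eps sigma; split.
  pose z : 'rV[R]_d := const_mx (2 * Rad).
  have gz : 0 < g z.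
    rewrite ltNge; apply/negP => /hbdd.
    rewrite /enorm /dotv.
    under eq_bigr => i _ do rewrite /z !mxE.
    rewrite sumr_const card_ord -mulr_natr.
    have hd1 : 1 <= d%:R :> R by rewrite ler1n.
    have : Num.sqrt (Rad ^+ 2) < Num.sqrt (2 * Rad * (2 * Rad) * d%:R).
      by rewrite ltr_sqrt; nra.
    rewrite sqrtr_sqr ger0_norm; last by lra.
    move=> h1; rewrite mulr_natr in h1 => h2; rewrite !mul1r in h2; by have := lt_le_trans h1 h2; rewrite ltxx.
  pose phi t := g (y + t *: (z - y)).
  have hc : @cvx1 R phi.
    move=> a b s s0 s1; rewrite /phi.
    have -> : y + (s * a + (1 - s) * b) *: (z - y)
        = s *: (y + a *: (z - y)) + (1 - s) *: (y + b *: (z - y)).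
      by apply/rowP => i; rewrite !mxE; ring.
    exact: hconv.
  have p0 : phi 0 < - eps by rewrite /phi scale0r addr0 /eps; nra.
  have p1 : - eps < phi 1.
    by rewrite /phi scale1r addrC subrK /eps; nra.
  have [t ht] := @ivt_cvx R phi (- eps) hc p0 p1.
  by exists (y + t *: (z - y)).
move=> x s gx hs.
have hx : enorm x <= Rad by apply: hbdd; rewrite gx /eps; nra.
have hy : enorm (- y) <= Rad by rewrite enormN; apply: hbdd; lra.
have h1 := hs y.
rewrite dotvB in h1.
have c1' := @cs R d s x.
have c2' := @cs R d s (- y).
rewrite dotvN in c2'.
have ns0 : 0 <= enorm s by rewrite /enorm sqrtr_ge0.
have : enorm s * enorm x <= enorm s * Rad by rewrite ler_wpM2l.
have : enorm s * enorm (- y) <= enorm s * Rad by rewrite ler_wpM2l.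
move=> a1 a2.
have key : (1 - c) * xi <= enorm s * (2 * Rad).
  move: h1; rewrite gx /eps; lra.
rewrite /sigma mulrA ler_pdivrMr //; lra.
Qed.
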